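(* Let $f\in\mathbf C\{x\}[y]$ be a reduced distinguished polynomial of degree $n\ge2$, written $f=\prod_{i=1}^n(y-a_i)$ with $\sum_ia_i=0$. Then for every $w\in\mathcal E\cap\mathcal O$, $$\mathrm{val}(w)\ge n\delta\rho(w)-\sup\{m_i:1\le i\le n\}.$$ In particular $\mathcal E\cap\mathcal O_q\subset\mathcal E_0$ as soon as $q\ge\sup_i m_i/(n\delta)$.
   Context: Distinguished: monic in $y$ with $f(0,y)=y^n$; the $a_i$ are pairwise distinct Puiseux series in $\overline K=\bigcup_{e\ge1}\mathbf C[[x^{1/e}]][1/x]$ with valuation $\nu$. $m_{i,j}=\nu(a_i-a_j)$, $m_i=\sum_{j\ne i}m_{i,j}$, $\delta=\inf_i\nu(a_i)$ ($>0$). $\mathcal O=\mathbf C\{x,y\}$. $\varepsilon_i=\prod_{j\ne i}(y-a_j)$; for $w=\sum w_i\varepsilon_i$ of degree $<n$, $\mathrm{val}(w)=\inf\nu(w_i)$. $\mathcal E$ is the $\mathbf C((x))$-space of polynomials in $y$ of degree $<n$, $\mathcal E_0=\{w\in\mathcal E:\mathrm{val}(w)\ge0\}$. For $w=\sum w_{k,l}x^ky^l\in\mathcal O$ nonzero, $\rho(w)=\inf\{k/(n\delta)+l/n:w_{k,l}\ne0\}$, and $\mathcal O_q=\{w\in\mathcal O:\rho(w)\ge q\}$ (with $\rho(0)=+\infty$). *)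

(* Defs.v *)
From HB Require Import structures.
From mathcomp Require Import all_boot all_order all_algebra.
From mathcomp Require Import complex.
From mathcomp Require Import boolp classical_sets reals constructive_ereal ereal.

Set Implicit Arguments.
Unset Strict Implicit.
Unset Printing Implicit Defensive.

Import Order.TTheory GRing.Theory Num.Theory.
Local Open Scope ring_scope.

Section FPS.
Variable K : comNzRingType.

Record fps := FPS { fcoef : nat -> K }.

HB.instance Definition _ := gen_eqMixin fps.
HB.instance Definition _ := gen_choiceMixin fps.

Lemma fpsP (a b : fps) : (forall k, fcoef a k = fcoef b k) -> a = b.
Proof. by case: a b => f [g] /= H; congr FPS; apply: funext. Qed.

Definition fps0 := FPS (fun _ => 0).
Definition fpsadd a b := FPS (fun k => fcoef a k + fcoef b k).
Definition fpsopp a := FPS (fun k => - fcoef a k).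

Lemma fpsaddA : associative fpsadd.
Proof. by move=> a b c; apply: fpsP => k /=; rewrite addrA. Qed.
Lemma fpsaddC : commutative fpsadd.
Proof. by move=> a b; apply: fpsP => k /=; rewrite addrC. Qed.
Lemma fpsadd0 : left_id fps0 fpsadd.
Proof. by move=> a; apply: fpsP => k /=; rewrite add0r. Qed.
Lemma fpsaddN : left_inverse fps0 fpsopp fpsadd.
Proof. by move=> a; apply: fpsP => k /=; rewrite addNr. Qed.

HB.instance Definition _ := GRing.isZmodule.Build fps fpsaddA fpsaddC fpsadd0 fpsaddN.

Definition fpsmul a b :=
  FPS (fun k => \sum_(j < k.+1) fcoef a j * fcoef b (k - j)).
Definition fps1 := FPS (fun k => (k == 0%N)%:R).

Definition trunc (k : nat) (a : fps) : {poly K} := \poly_(i < k.+1) fcoef a i.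

Lemma truncE k j a : (j <= k)%N -> (trunc k a)`_j = fcoef a j.
Proof. by move=> hj; rewrite coef_poly ltnS hj. Qed.

Lemma fcoef_mul_trunc k a b : fcoef (fpsmul a b) k = (trunc k a * trunc k b)`_k.
Proof.
rewrite coefM /=; apply: eq_bigr => j _.
by rewrite !truncE // ?leq_subr // -ltnS ltn_ord.
Qed.

Lemma coef_mul_eq k (P Q S : {poly K}) :
  (forall j, (j <= k)%N -> P`_j = Q`_j) -> (P * S)`_k = (Q * S)`_k.
Proof.
by move=> H; rewrite !coefM; apply: eq_bigr => j _; rewrite H // -ltnS ltn_ord.
Qed.

Lemma trunc_mul k a b j : (j <= k)%N ->
  (trunc k (fpsmul a b))`_j = (trunc k a * trunc k b)`_j.
Proof.
move=> hj; rewrite truncE // fcoef_mul_trunc coefM.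
rewrite coefM; apply: eq_bigr => i _.
have hi : (i <= j)%N by rewrite -ltnS ltn_ord.
have hij : (j - i <= j)%N by apply: leq_subr.
rewrite (truncE _ (leq_trans hi hj)) (truncE _ (leq_trans hij hj)).
by rewrite (truncE _ hi) (truncE _ hij).
Qed.

Lemma fpsmulA : associative fpsmul.
Proof.
move=> a b c; apply: fpsP => k; rewrite !fcoef_mul_trunc.
have -> : (trunc k a * trunc k (fpsmul b c))`_k
          = (trunc k b * trunc k c * trunc k a)`_k.
  rewrite mulrC; apply: coef_mul_eq => j hj; by rewrite trunc_mul.
have -> : (trunc k (fpsmul a b) * trunc k c)`_k
          = (trunc k a * trunc k b * trunc k c)`_k.
  by apply: coef_mul_eq => j hj; rewrite trunc_mul.
have E : trunc k b * trunc k c * trunc k a = trunc k a * trunc k b * trunc k c.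
  by rewrite mulrC mulrA.
by rewrite E.
Qed.

Lemma fpsmulC : commutative fpsmul.
Proof. by move=> a b; apply: fpsP => k; rewrite !fcoef_mul_trunc mulrC. Qed.

Lemma fpsmul1 : left_id fps1 fpsmul.
Proof.
move=> a; apply: fpsP => k; rewrite fcoef_mul_trunc.
rewrite (coef_mul_eq _ (Q := 1)); first by rewrite mul1r truncE.
by move=> j hj; rewrite truncE // coef1.
Qed.

Lemma fpsmulDl : left_distributive fpsmul fpsadd.
Proof.
move=> a b c; apply: fpsP => k /=; rewrite -big_split /=.
by apply: eq_bigr => j _; rewrite mulrDl.
Qed.

Lemma fps1_neq0 : fps1 != fps0.
Proof.
apply/eqP => /(congr1 (fun x => fcoef x 0)) /= /eqP.
by rewrite oner_eq0.
Qed.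

HB.instance Definition _ :=
  GRing.Zmodule_isComNzRing.Build fps fpsmulA fpsmulC fpsmul1 fpsmulDl fps1_neq0.

Definition fpsX : fps := FPS (fun k => (k == 1%N)%:R).

(* substitution  x := t^e : a series in x viewed as a series in t = x^(1/e) *)
Definition ramify (e : nat) (c : fps) : fps :=
  FPS (fun m => if (e %| m)%N then fcoef c (m %/ e) else 0).

End FPS.

Section Puiseux.
Variable R : realType.
Local Notation C := R[i].
Local Open Scope complex_scope.
Local Open Scope ring_scope.

Definition convergent (c : fps C) : Prop :=
  exists r : R, 0 < r /\ exists M : R,
    forall k, `|fcoef c k| * (r ^+ k)%:C <= M%:C.

(* an element of C{x}[y] (or C((x))[y]), given by its y-coefficients
   w`_l = sum_k w_{k,l} x^k, lies in O = C{x,y} *)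
Definition in_O (w : {poly fps C}) : Prop :=
  exists r : R, 0 < r /\ exists M : R,
    forall k l, `|fcoef w`_l k| * (r ^+ (k + l))%:C <= M%:C.

Definition in_E (n : nat) (w : {poly fps C}) : bool := (size w <= n)%N.

Local Open Scope ereal_scope.

(* valuation nu (normalised so that nu(x) = 1) of the Puiseux series
   u(x^(1/e)) in C[[x^(1/e)]], u given as a series in t = x^(1/e);
   nu(0) = +oo *)
Definition puis_val (e : nat) (u : fps C) : \bar R :=
  ereal_inf [set ((k%:R / e%:R)%R)%:E | k in [set k : nat | fcoef u k != 0%R]].

(* valuation of the element t^(-N) u of C[[x^(1/e)]][1/x] *)
Definition laurent_val (e N : nat) (u : fps C) : \bar R :=
  puis_val e u - ((N%:R / e%:R)%R)%:E.

Variables (n e : nat) (a : 'I_n -> fps C).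

Definition m_ij (i j : 'I_n) : \bar R := puis_val e (a i - a j)%R.
Definition m_i (i : 'I_n) : \bar R := \sum_(j < n | j != i) m_ij i j.
Definition sup_m : \bar R := ereal_sup [set m_i i | i in [set: 'I_n]].

Definition eps (i : 'I_n) : {poly fps C} := (\prod_(j < n | j != i) ('X - (a j)%:P))%R.

(* w = sum_i w_i eps_i with w_i = t^(-N) u_i in C[[x^(1/e)]][1/x]
   (w has coefficients in C((x)); x = t^e) *)
Definition Edecomp (w : {poly fps C}) (N : nat) (u : 'I_n -> fps C) : Prop :=
  ((fpsX C) ^+ N *: map_poly (ramify e) w = \sum_(i < n) u i *: eps i)%R.

(* val(w) = inf_i nu(w_i); the decomposition is unique (a_i distinct),
   the set below is the singleton {valE w} *)
Definition valE (w : {poly fps C}) : \bar R :=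
  ereal_inf [set v | exists N u, Edecomp w N u /\
     v = ereal_inf [set laurent_val e N (u i) | i in [set: 'I_n]]].

End Puiseux.

Definition rho (R : realType) (n : nat) (delta : R) (w : {poly fps R[i]}) : \bar R :=
  ereal_inf [set v : \bar R | exists k l : nat, fcoef w`_l k != 0 /\
               v = ((k%:R / (n%:R * delta) + l%:R / n%:R)%R)%:E].

(* Main.v *)
Require Import Defs.
From HB Require Import structures.
From mathcomp Require Import all_boot all_order all_algebra.
From mathcomp Require Import complex.
From mathcomp Require Import boolp classical_sets reals constructive_ereal ereal.
From mathcomp Require Import ring lra zify.
Set Implicit Arguments. Unset Strict Implicit. Unset Printing Implicit Defensive.
Import Order.TTheory GRing.Theory Num.Theory.
Local Open Scope ring_scope.

Section V.
Variable R : realType.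
Local Notation C := R[i].
Local Notation F := (fps C).

Lemma fcoef0 k : fcoef (0 : F) k = 0. Proof. by []. Qed.
Lemma fcoefD (u v : F) k : fcoef (u + v) k = fcoef u k + fcoef v k. Proof. by []. Qed.
Lemma fcoefN (u : F) k : fcoef (- u) k = - fcoef u k. Proof. by []. Qed.
Lemma fcoefB (u v : F) k : fcoef (u - v) k = fcoef u k - fcoef v k. Proof. by []. Qed.
Lemma fcoefM (u v : F) k :
  fcoef (u * v) k = \sum_(j < k.+1) fcoef u j * fcoef v (k - j).
Proof. by []. Qed.
Lemma fcoef1 k : fcoef (1 : F) k = (k == 0%N)%:R. Proof. by []. Qed.

Lemma fps_neq0 (u : F) : u != 0 -> exists p, fcoef u p != 0 /\ forall k, (k < p)%N -> fcoef u k = 0.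
Proof.
move=> u0.
have ex : exists k, fcoef u k != 0.
  apply/not_existsP => H; move/eqP: u0; apply; apply: fpsP => k /=.
  by have := H k; move/negP; rewrite negbK => /eqP.
exists (ex_minn ex); case: ex_minnP => p hp hmin; split => // k hk.
by apply/eqP; apply: contraTT hk => /hmin; rewrite -leqNgt.
Qed.

Lemma mul_min (u v : F) p q :
  (forall k, (k < p)%N -> fcoef u k = 0) -> (forall k, (k < q)%N -> fcoef v k = 0) ->
  (forall k, (k < p + q)%N -> fcoef (u * v) k = 0) /\
  fcoef (u * v) (p + q) = fcoef u p * fcoef v q.
Proof.
move=> hu hv; split.
  move=> k hk; rewrite fcoefM big1 // => j _.
  case: (ltnP j p) => hj; first by rewrite hu // mul0r.
  by rewrite hv ?mulr0 //; have := ltn_ord j; lia.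
have hp : (p < (p+q).+1)%N by lia.
rewrite fcoefM (bigD1 (Ordinal hp)) //= big1 ?addr0; first by rewrite addKn.
move=> j /eqP hj; case: (ltnP j p) => hjp; first by rewrite hu // mul0r.
rewrite hv ?mulr0 //.
have : (nat_of_ord j != p) by apply/eqP => hh; apply: hj; apply: val_inj.
have := ltn_ord j; lia.
Qed.

Lemma fps_mul_neq0 (u v : F) : u != 0 -> v != 0 -> u * v != 0.
Proof.
move=> /fps_neq0 [p [hp hu]] /fps_neq0 [q [hq hv]].
have [_ E] := mul_min hu hv.
apply/eqP => h; move: E; rewrite h fcoef0 => /esym /eqP.
by rewrite mulf_eq0 (negbTE hp) (negbTE hq).
Qed.
Variable e : nat.
Hypothesis e0 : (0 < e)%N.

Lemma pv_geP (u : F) (x : \bar R) :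
  (x <= puis_val e u)%E <-> (forall k, fcoef u k != 0%R -> x <= (k%:R / e%:R)%:E)%E.
Proof.
split.
  move=> h k hk; apply: le_trans h _; apply: ereal_inf_lbound; by exists k.
move=> h; apply: le_ereal_inf_tmp => y [k hk <-]; exact: h.
Qed.

Lemma pv0 : puis_val e (0%R : F) = +oo%E.
Proof. apply/eqP; rewrite eq_le leey /=; apply/pv_geP => k; by rewrite fcoef0 eqxx. Qed.

Lemma pv_ge0 (u : F) : (0 <= puis_val e u)%E.
Proof. apply/pv_geP => k _; rewrite lee_fin divr_ge0 //. Qed.

Lemma pv_min (u : F) p : fcoef u p != 0%R -> (forall k, (k < p)%N -> fcoef u k = 0%R) ->
  puis_val e u = (p%:R / e%:R)%:E.
Proof.
move=> hp hmin; apply/eqP; rewrite eq_le; apply/andP; split.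
  by apply: ereal_inf_lbound; exists p.
apply/pv_geP => k hk; rewrite lee_fin ler_pM2r ?invr_gt0 ?ltr0n // ler_nat.
by rewrite leqNgt; apply/negP => /hmin /eqP; apply/negP.
Qed.

Lemma pv_fin (u : F) : u != 0%R -> exists p, fcoef u p != 0%R /\ puis_val e u = (p%:R / e%:R)%:E.
Proof. by move=> /fps_neq0 [p [hp hm]]; exists p; split => //; apply: pv_min. Qed.

Lemma pvM (u v : F) : puis_val e (u * v)%R = (puis_val e u + puis_val e v)%E.
Proof.
have [->|u0] := eqVneq u 0; first by rewrite mul0r pv0 addye // gt_eqF // (lt_le_trans _ (pv_ge0 v)) ?ltNy0.
have [->|v0] := eqVneq v 0; first by rewrite mulr0 pv0 addey // gt_eqF // (lt_le_trans _ (pv_ge0 u)) ?ltNy0.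
have [p [hp hu]] := fps_neq0 u0; have [q [hq hv]] := fps_neq0 v0.
have [h1 h2] := mul_min hu hv.
rewrite (pv_min hp hu) (pv_min hq hv) (pv_min _ h1); last by rewrite h2 mulf_neq0.
by rewrite -EFinD natrD mulrDl.
Qed.

Lemma pvD (u v : F) x : (x <= puis_val e u -> x <= puis_val e v -> x <= puis_val e (u + v)%R)%E.
Proof.
move=> /pv_geP hu /pv_geP hv; apply/pv_geP => k; rewrite fcoefD.
have [h|h] := eqVneq (fcoef u k) 0; first by rewrite h add0r; apply: hv.
by move=> _; apply: hu.
Qed.

Lemma pv_sum I (r : seq I) (P : pred I) (G : I -> F) x :
  (forall i, P i -> x <= puis_val e (G i))%E -> (x <= puis_val e (\sum_(i <- r | P i) G i)%R)%E.
Proof.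
move=> h; elim/big_ind: _ => //; first by rewrite pv0 leey.
by move=> a b ha hb; apply: pvD.
Qed.

Lemma pv1 : puis_val e (1%R : F) = 0%E.
Proof. rewrite (@pv_min _ 0) ?mul0r //; first by rewrite fcoef1 oner_neq0. Qed.

Lemma pv_prod I (r : seq I) (P : pred I) (G : I -> F) :
  puis_val e (\prod_(i <- r | P i) G i)%R = (\sum_(i <- r | P i) puis_val e (G i))%E.
Proof. exact: (big_morph _ pvM pv1). Qed.

Lemma pv_prod_neq0 I (r : seq I) (P : pred I) (G : I -> F) :
  (forall i, P i -> G i != 0%R) -> (\prod_(i <- r | P i) G i != 0)%R.
Proof.
move=> h; elim/big_ind: _ => //; first exact: oner_neq0.
by move=> a b; apply: fps_mul_neq0.
Qed.


Lemma ram0 : ramify e (0%R : F) = 0%R.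
Proof. apply: fpsP => m /=; by case: ifP. Qed.

Lemma pv_ram (c : F) k0 : fcoef c k0 != 0%R -> (forall k, (k < k0)%N -> fcoef c k = 0%R) ->
  puis_val e (ramify e c) = (k0%:R)%:E.
Proof.
move=> hk hm; rewrite (@pv_min _ (k0 * e)).
- by rewrite natrM mulfK // pnatr_eq0 -lt0n.
- by rewrite /= dvdn_mull // mulnK.
move=> m hmk /=; case: ifP => // /dvdnP [q hq]; move: hmk; rewrite hq => hmk; rewrite mulnK //; apply: hm.
by rewrite -(ltn_pmul2r e0).
Qed.

Lemma pvX1 : puis_val e (fpsX C) = (1 / e%:R)%:E.
Proof.
rewrite (@pv_min _ 1) //=.
by move=> k; case: k.
Qed.

Lemma pvXn N : puis_val e (fpsX C ^+ N) = (N%:R / e%:R)%:E.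
Proof.
elim: N => [|N IH]; first by rewrite expr0 pv1 mul0r.
by rewrite exprS pvM IH pvX1 -EFinD -mulrDl -natr1 addrC.
Qed.

Lemma pvXpow (b : F) (d : R) l : (d%:E <= puis_val e b)%E -> ((l%:R * d)%:E <= puis_val e (b ^+ l)%R)%E.
Proof.
move=> hb; elim: l => [|l IH]; first by rewrite expr0 pv1 mul0r.
by rewrite exprS pvM -natr1 mulrDl mul1r addrC EFinD leeD.
Qed.

Lemma key (w : {poly F}) (b : F) (delta : R) (n : nat) : (0 < n)%N -> (0 < delta)%R ->
  (delta%:E <= puis_val e b)%E ->
  ((n%:R * delta)%:E * rho n delta w <= puis_val e ((map_poly (ramify e) w).[b]))%E.
Proof.
move=> n0 d0 hb; rewrite horner_coef; apply: pv_sum => l _.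
rewrite coef_map_id0 ?ram0 // pvM.
have [->|wl0] := eqVneq w`_l 0%R.
  by rewrite ram0 pv0 addye ?leey // gt_eqF // (lt_le_trans _ (pv_ge0 _)) ?ltNy0.
have [k0 [hk hm]] := fps_neq0 wl0.
rewrite (pv_ram hk hm).
apply: (@le_trans _ _ ((k0%:R)%:E + (l%:R * delta)%:E)%E); last by apply: leeD2l; apply: pvXpow.
have -> : ((k0%:R)%:E + (l%:R * delta)%:E)%E = ((n%:R * delta)%:E * (k0%:R / (n%:R * delta) + l%:R / n%:R)%:E)%E.
  rewrite -EFinM -EFinD; congr (_%:E); field.
  by rewrite pnatr_eq0 -lt0n n0 /= gt_eqF.
apply: lee_wpmul2l; first by rewrite lee_fin mulr_ge0 // ltW.
by apply: ereal_inf_lbound; exists k0, l.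
Qed.

End V.
Lemma ecomb (R : realType) (L W y s : \bar R) (c mr : R) : (L <= W)%E -> (mr%:E <= s)%E ->
  (c%:E + W = y + mr%:E)%E -> (L - s <= y - c%:E)%E.
Proof.
move: L W y s => [L| |] [W| |] [y| |] [s| |] //=; rewrite ?lee_fin ?leey ?leNye //=;
 try (move=> _ _ [] ; lra); try (move=> *; lra); try done.
all: move=> h1 h2 h3; try (case: h3; lra).
Qed.

Section C0.
Variable R : realType.
Local Notation F := (fps R[i]).
Definition c0 (u : F) : R[i] := fcoef u 0.
Lemma c0_nmod : nmod_morphism c0.
Proof. by split. Qed.
HB.instance Definition _ := GRing.isNmodMorphism.Build F R[i] c0 c0_nmod.
Lemma c0_monoid : monoid_morphism c0.
Proof. split; first by []. by move=> u v; rewrite /c0 fcoefM big_ord1. Qed.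
HB.instance Definition _ := GRing.isMonoidMorphism.Build F R[i] c0 c0_monoid.
End C0.
Theorem mainTheorem17 (R : realType) (n e : nat) (f : {poly fps R[i]})
    (a : 'I_n -> fps R[i]) (delta : R) :
  (2 <= n)%N ->
  (* distinguished of degree n, with coefficients in C{x} *)
  f \is monic -> size f = n.+1 ->
  map_poly (fun c : fps R[i] => fcoef c 0) f = 'X^n ->
  (forall j, convergent f`_j) ->
  (* f = prod_i (y - a_i) with pairwise distinct Puiseux series a_i in
     C[[x^(1/e)]], and sum_i a_i = 0 *)
  (0 < e)%N ->
  map_poly (ramify e) f = \prod_(i < n) ('X - (a i)%:P) ->
  injective a ->
  \sum_(i < n) a i = 0 ->
  (* delta = inf_i nu(a_i) *)
  (delta%:E = ereal_inf [set puis_val e (a i) | i in [set: 'I_n]])%E ->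
  (forall w : {poly fps R[i]}, in_E n w -> in_O w ->
     ((n%:R * delta)%:E * rho n delta w - sup_m e a <= valE e a w)%E)
  /\
  (forall q : R, (sup_m e a * ((n%:R * delta)^-1)%:E <= q%:E)%E ->
     forall w : {poly fps R[i]}, in_E n w -> in_O w ->
       (q%:E <= rho n delta w)%E -> (0 <= valE e a w)%E).
Proof.
move=> n2 fmon fsize f0 fconv e0 fprod ainj asum hdelta.
have n0 : (0 < n)%N by lia.
have a0 : forall i, c0 (a i) = 0.
  move=> i.
  have E : map_poly (@c0 R) (map_poly (ramify e) f) = 'X^n.
    rewrite -map_poly_comp_id0 // -f0; apply: eq_map_poly => c /=.
    by rewrite /c0 /= dvdn0 div0n.
  move: E; rewrite fprod rmorph_prod.
  move/(congr1 (horner^~ (c0 (a i)))).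
  rewrite hornerXn horner_prod (bigD1 i) //= map_polyXsubC hornerXsubC subrr mul0r.
  by move/esym/eqP; rewrite expf_eq0 => /andP[_ /eqP].
have hai1 : forall i, ((1 / e%:R)%:E <= puis_val e (a i))%E.
  move=> i; apply/pv_geP => k hk; rewrite lee_fin ler_pM2r ?invr_gt0 ?ltr0n //.
  case: k hk => [|k _]; first by rewrite -/(c0 _) a0 eqxx.
  by rewrite ler1n.
have hdel : ((1 / e%:R)%:E <= delta%:E)%E.
  rewrite hdelta; apply: le_ereal_inf_tmp => y [i _ <-]; exact: hai1.
have d0 : (0 < delta)%R.
  rewrite lee_fin in hdel; apply: lt_le_trans hdel; by rewrite divr_gt0 ?ltr0n.
have hda : forall i, (delta%:E <= puis_val e (a i))%E.
  move=> i; rewrite hdelta; apply: ereal_inf_lbound; by exists i.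
have epsE : forall i j, (eps a j).[a i] = \prod_(k < n | k != j) (a i - a k).
  move=> i j; rewrite /eps horner_prod; apply: eq_bigr => k _; by rewrite hornerXsubC.
have eps0 : forall i j, j != i -> (eps a j).[a i] = 0.
  move=> i j ji; by rewrite epsE (bigD1 i) 1?eq_sym //= subrr mul0r.
have mi_eq : forall i, m_i e a i = puis_val e (eps a i).[a i].
  move=> i; by rewrite epsE (pv_prod e0).
have mi_fin : forall i, exists mr : R, m_i e a i = mr%:E.
  move=> i; rewrite mi_eq epsE.
  have : \prod_(k < n | k != i) (a i - a k) != 0.
    apply: pv_prod_neq0 => k ki; rewrite subr_eq0; apply/eqP => h.
    by move/eqP: ki; apply; apply: ainj.
  move/(pv_fin e0) => [p [_ ->]]; by eexists.
have hms : forall i, (m_i e a i <= sup_m e a)%E.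
  move=> i; apply: ereal_sup_ubound; by exists i.
have part1 : forall w : {poly fps R[i]}, in_E n w -> in_O w ->
   ((n%:R * delta)%:E * rho n delta w - sup_m e a <= valE e a w)%E.
  move=> w _ _; apply: le_ereal_inf_tmp => v [N [u [hd ->]]].
  apply: le_ereal_inf_tmp => y [i _ <-].
  have ev := congr1 (horner^~ (a i)) hd; simpl in ev.
  rewrite hornerZ horner_sum (bigD1 i) //= big1 ?addr0 in ev; last first.
    by move=> j ji; rewrite hornerZ eps0 ?mulr0.
  rewrite hornerZ in ev.
  have [mr hmr] := mi_fin i.
  have ev2 := congr1 (puis_val e) ev.
  rewrite !(pvM e0) (pvXn R e0) -mi_eq hmr in ev2.
  have hs := hms i; rewrite hmr in hs.
  rewrite /laurent_val; apply: ecomb ev2 => //.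
  exact: (key e0).
split => // q hq w hE hO hqr.
apply: le_trans (part1 w hE hO).
have [mr hmr] := mi_fin (Ordinal n0).
have hs := hms (Ordinal n0); rewrite hmr in hs.
have r0 : (0 <= rho n delta w)%E.
  apply: le_ereal_inf_tmp => v [k [l [_ ->]]].
  by rewrite lee_fin addr_ge0 // divr_ge0 // ?mulr_ge0 // ltW.
have D0 : (0 < n%:R * delta)%R by rewrite mulr_gt0 // ltr0n.
move: hq hs hqr r0; case: (sup_m e a) => [s| |]; case: (rho n delta w) => [r| |] //=.
  rewrite !lee_fin => hq _ hqr _; rewrite subr_ge0.
  rewrite ler_pdivrMr // in hq.
  have := ler_wpM2l (ltW D0) hqr; lra.
- by move=> *; rewrite mulry gtr0_sg // mul1e addye.
- by rewrite mulyr gtr0_sg ?invr_gt0 // mul1e leye_eq.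
- by rewrite mulyr gtr0_sg ?invr_gt0 // mul1e leye_eq.
Qed.
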